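(* Let $G$ be a connected nontrivial graph with $m$ vertices and let $n\geq3$. Then $$\lambda'(G\boxtimes C_n)=\min\{3n\lambda(G),\ 2(m+2e(G)),\ 6\delta(G)+2\}.$$
   Context: All graphs are finite, simple and undirected; ''nontrivial'' means having at least two vertices. $C_n$ denotes the cycle on $n$ vertices. For a graph $G$: $e(G)=|E(G)|$; $\delta(G)$ is the minimum degree; $\lambda(G)$ is the edge-connectivity. A restricted edge-cut of a connected graph $G$ is a set $S\subseteq E(G)$ such that $G-S$ is disconnected and every component of $G-S$ has at least $2$ vertices; the restricted edge-connectivity $\lambda'(G)$ is the minimum cardinality of a restricted edge-cut. The strong product $G\boxtimes H$ has vertex set $V(G)\times V(H)$, with $(x_1,y_1)$ and $(x_2,y_2)$ adjacent iff either $x_1=x_2$ and $y_1y_2\in E(H)$, or $y_1=y_2$ and $x_1x_2\in E(G)$, or $x_1x_2\in E(G)$ and $y_1y_2\in E(H)$. *)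

(* Defs.v *)
(* finite simple graphs as symmetric irreflexive relations
   on a finType. *)
From mathcomp Require Import all_boot.
Set Implicit Arguments. Unset Strict Implicit. Unset Printing Implicit Defensive.

Section Graphs.
Variable T : finType.
Variable e : rel T.

Definition edges : {set {set T}} :=
  [set [set x; y] | x in T, y in T & e x y].

Definition del_edges (S : {set {set T}}) : rel T :=
  fun x y => e x y && ([set x; y] \notin S).

Definition connectedb (r : rel T) : bool :=
  [forall x, forall y, connect r x y].

Definition edge_cut (S : {set {set T}}) : bool :=
  (S \subset edges) && ~~ connectedb (del_edges S).

Definition restricted_edge_cut (S : {set {set T}}) : bool :=
  edge_cut S && [forall x, exists y, (y != x) && connect (del_edges S) x y].

(* lambda(G): minimum size of an edge-cut (default #|E| never used for
   nontrivial graphs, since E itself is then an edge-cut) *)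
Definition edge_conn : nat :=
  \big[minn/#|edges|]_(S : {set {set T}} | edge_cut S) #|S|.

Definition restr_edge_conn : nat :=
  \big[minn/#|edges|]_(S : {set {set T}} | restricted_edge_cut S) #|S|.

Definition degree (x : T) : nat := #|[set y | e x y]|.

Definition min_deg : nat := \big[minn/#|T|]_(x : T) degree x.

End Graphs.

Definition cycle_rel (n : nat) : rel 'I_n :=
  fun i j => (nat_of_ord j == i.+1 %% n) || (nat_of_ord i == j.+1 %% n).

Definition strong_prod (U W : finType) (g : rel U) (h : rel W) : rel (U * W) :=
  fun p q => [|| (p.1 == q.1) && h p.2 q.2,
                 (p.2 == q.2) && g p.1 q.1
               | g p.1 q.1 && h p.2 q.2].
Arguments cycle_rel n : clear implicits.

(* Main.v *)
Require Import Defs.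
From mathcomp Require Import all_boot zify.
Set Implicit Arguments. Unset Strict Implicit. Unset Printing Implicit Defensive.

Section Gen.
Variable T : finType.
Variable r : rel T.
Hypothesis rs : symmetric r.

Definition Qc (A B : {set T}) : nat :=
  \sum_(x : T) \sum_(y : T) ((x \in A) && (y \notin B) && r x y).

Lemma Qswap A B : Qc A B = \sum_(x : T) \sum_(y : T) ((y \in A) && (x \notin B) && r x y).
Proof.
rewrite /Qc exchange_big; apply: eq_bigr => x _; apply: eq_bigr => y _.
by rewrite rs.
Qed.

Lemma sum2_split (F1 F2 : T -> T -> nat) :
  \sum_(x : T) \sum_(y : T) F1 x y + \sum_(x : T) \sum_(y : T) F2 x y =
  \sum_(x : T) \sum_(y : T) (F1 x y + F2 x y).
Proof. by rewrite -big_split; apply: eq_bigr => x _; rewrite big_split. Qed.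

Lemma QF A B : Qc (A :&: B) (A :&: B) + Qc (A :|: B) (A :|: B) <= Qc A B + Qc B A.
Proof.
suff H : (Qc (A :&: B) (A :&: B) + Qc (A :&: B) (A :&: B)) +
         (Qc (A :|: B) (A :|: B) + Qc (A :|: B) (A :|: B)) <=
         (Qc A B + Qc A B) + (Qc B A + Qc B A) by lia.
rewrite {2}(Qswap (A :&: B)) {2}(Qswap (A :|: B)) {2}(Qswap A B) {2}(Qswap B A).
rewrite /Qc !sum2_split; apply: leq_sum => x _; apply: leq_sum => y _.
rewrite !inE.
by case: (x \in A); case: (x \in B); case: (y \in A); case: (y \in B); case: (r x y).
Qed.

Definition arcset (A : {set T}) : {set T * T} :=
  [set p : T * T | (p.1 \in A) && (p.2 \notin A) && r p.1 p.2].

Definition cutset (A : {set T}) : {set {set T}} :=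
  [set [set p.1; p.2] | p in arcset A].

Lemma card_arcset A : #|arcset A| = Qc A A.
Proof.
rewrite /Qc pair_big /= -sum1_card big_mkcond /=.
by apply: eq_bigr => p _; rewrite inE; case: ifP.
Qed.

Lemma card_cutset A : #|cutset A| = Qc A A.
Proof.
rewrite /cutset card_in_imset ?card_arcset // => p q.
rewrite !inE => /andP[/andP[p1 p2] _] /andP[/andP[q1 q2] _] E.
have h1 : p.1 \in [set q.1; q.2] by rewrite -E set21.
have h2 : p.2 \in [set q.1; q.2] by rewrite -E set22.
move: h1 h2; rewrite !inE => /orP[/eqP e1|/eqP e1] /orP[/eqP e2|/eqP e2].
- by move: p2; rewrite e2 q1.
- by case: p q e1 e2 {E p1 p2 q1 q2} => a b [c d] /= -> ->.
- by move: q2; rewrite -e1 p1.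
- by move: q2; rewrite -e1 p1.
Qed.


Lemma cutset_edges (A : {set T}) : cutset A \subset edges r.
Proof.
apply/subsetP => E /imsetP[p]; rewrite inE => /andP[/andP[_ _] rp] ->.
by apply/imset2P; exists p.1 p.2; rewrite ?inE.
Qed.

Lemma in_cutset (A : {set T}) x y : x \in A -> y \notin A -> r x y -> [set x; y] \in cutset A.
Proof.
move=> xA yA rxy; apply/imsetP; exists (x, y) => //.
by rewrite inE /= xA yA rxy.
Qed.

Lemma cut_closed (A : {set T}) (S : {set {set T}}) (x y : T) : cutset A \subset S ->
  connect (del_edges r S) x y -> (x \in A) = (y \in A).
Proof.
move=> sub /connectP[p pp ->]; elim: p x pp => //= z p IH x /andP[dxz pz].
rewrite -(IH z pz); move: dxz; rewrite /del_edges => /andP[rxz nS].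
case xA: (x \in A); case zA: (z \in A) => //.
  by move: nS; rewrite (subsetP sub) // in_cutset ?zA.
by move: nS; rewrite setUC (subsetP sub) // in_cutset ?xA // rs.
Qed.

Hypothesis ri : irreflexive r.

Lemma restricted_cutset (A : {set T}) : (exists x, x \in A) -> (exists y, y \notin A) ->
  (forall x, exists2 y, r x y & (x \in A) = (y \in A)) ->
  restricted_edge_cut r (cutset A).
Proof.
move=> [x xA] [y yA] nb; rewrite /restricted_edge_cut /edge_cut cutset_edges /=.
apply/andP; split.
  apply/negP => /forallP /(_ x) /forallP /(_ y) cxy.
  by move: (cut_closed (subxx _) cxy); rewrite xA (negbTE yA).
apply/forallP => z; have [w rzw sw] := nb z; apply/existsP; exists w.
apply/andP; split; first by apply/eqP => wz; move: rzw; rewrite wz ri.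
apply: connect1; rewrite /del_edges rzw /=; apply/negP => /imsetP[p].
rewrite inE => /andP[/andP[p1 p2] _] E.
have h1 : z \in [set p.1; p.2] by rewrite -E set21.
have h2 : w \in [set p.1; p.2] by rewrite -E set22.
move: h1 h2; rewrite !inE => /orP[/eqP e1|/eqP e1] /orP[/eqP e2|/eqP e2].
- by move: rzw; rewrite e1 e2 ri.
- by move: sw; rewrite e1 e2 p1 (negbTE p2).
- by move: sw; rewrite e1 e2 p1 (negbTE p2).
- by move: rzw; rewrite e1 e2 ri.
Qed.

Lemma extract (S : {set {set T}}) : restricted_edge_cut r S ->
  exists A : {set T}, [/\ cutset A \subset S, 1 < #|A| & 1 < #|~: A|].
Proof.
rewrite /restricted_edge_cut /edge_cut => /andP[/andP[_ nc] /forallP nb].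
have [x [y nxy]] : exists x y, ~~ connect (del_edges r S) x y.
  move: nc; rewrite /connectedb negb_forall => /existsP[x].
  by rewrite negb_forall => /existsP[y ?]; exists x, y.
have dsym : symmetric (del_edges r S).
  by move=> a b; rewrite /del_edges rs setUC.
set A := [set z | connect (del_edges r S) x z].
have sub : cutset A \subset S.
  apply/subsetP => E /imsetP[p]; rewrite !inE => /andP[/andP[p1 p2] rp] ->.
  apply: contraR p2 => nS; apply: connect_trans p1 _; apply: connect1.
  by rewrite /del_edges rp nS.
exists A; split => //.
  have /existsP[x' /andP[nx' cx']] := nb x.
  by apply/card_gt1P; exists x, x'; rewrite !inE connect0 cx' eq_sym nx'.
have /existsP[y' /andP[ny' cy']] := nb y.
apply/card_gt1P; exists y, y'; rewrite !inE nxy eq_sym ny' /=; split => //.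
apply: contra nxy => cxy'; apply: connect_trans cxy' _.
by rewrite (sym_connect_sym dsym).
Qed.

End Gen.

Section BigMin.
Variables (I : finType) (P : pred I) (F : I -> nat) (d : nat).
Lemma bigmin_le i : P i -> \big[minn/d]_(j | P j) F j <= F i.
Proof.
move=> Pi; rewrite unlock; have : i \in index_enum I by rewrite mem_index_enum.
elim: (index_enum I) => //= j s IH; rewrite inE => /orP[/eqP <-|iS].
  by rewrite Pi /= geq_minl.
by case: (P j) => /=; [rewrite geq_min IH ?orbT | exact: IH].
Qed.
Lemma bigmin_ge L : L <= d -> (forall i, P i -> L <= F i) ->
  L <= \big[minn/d]_(j | P j) F j.
Proof. by move=> Ld LF; elim/big_ind: _ => // a b ha hb; rewrite leq_min ha hb. Qed.
Lemma bigmin_att : \big[minn/d]_(j | P j) F j = d \/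
  exists2 i, P i & \big[minn/d]_(j | P j) F j = F i.
Proof.
elim/big_ind: _; [by left| |by move=> i Pi; right; exists i].
move=> a b ha hb /=; case: (leqP a b) => ab.
  by [].
by [].
Qed.
End BigMin.

Section EC.
Variable T : finType.
Variable r : rel T.
Hypothesis rs : symmetric r.

Lemma edge_conn_le (A : {set T}) x y : x \in A -> y \notin A -> edge_conn r <= Qc r A A.
Proof.
move=> xA yA; rewrite -card_cutset //; apply: bigmin_le.
rewrite /edge_cut cutset_edges /=; apply/negP => /forallP/(_ x)/forallP/(_ y) c.
by move: (cut_closed rs (subxx _) c); rewrite xA (negbTE yA).
Qed.

Lemma edge_conn_att : 1 < #|T| -> exists A : {set T},
  [/\ exists x, x \in A, exists y, y \notin A & Qc r A A <= edge_conn r].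
Proof.
move=> T2; rewrite /edge_conn.
case: (bigmin_att (fun S => edge_cut r S) (fun S => #|S|) #|edges r|) => [->|[S eS ->]].
  have /card_gt1P[x [y [_ _ nxy]]] := T2.
  exists [set x]; split; [by exists x; rewrite inE| by exists y; rewrite inE eq_sym|].
  by rewrite -card_cutset // subset_leq_card // cutset_edges.
move: eS; rewrite /edge_cut => /andP[_ nc].
have [x [y nxy]] : exists x y, ~~ connect (del_edges r S) x y.
  move: nc; rewrite /connectedb negb_forall => /existsP[x].
  by rewrite negb_forall => /existsP[y ?]; exists x, y.
set A := [set z | connect (del_edges r S) x z].
have sub : cutset r A \subset S.
  apply/subsetP => E /imsetP[p]; rewrite !inE => /andP[/andP[p1 p2] rp] ->.
  apply: contraR p2 => nS; apply: connect_trans p1 _; apply: connect1.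
  by rewrite /del_edges rp nS.
exists A; split; [by exists x; rewrite inE connect0| by exists y; rewrite inE|].
by rewrite -card_cutset // subset_leq_card.
Qed.
End EC.

Lemma Qc_ge1 (T : finType) (r : rel T) (A B : {set T}) x y :
  x \in A -> y \notin B -> r x y -> 1 <= Qc r A B.
Proof. by move=> xA yB rxy; rewrite /Qc (bigD1 x) //= (bigD1 y) //= xA yB rxy. Qed.

Section Cyc.
Variable n : nat.
Hypothesis n3 : 2 < n.
Local Notation C := (cycle_rel n).
Definition Cp (i j : 'I_n) := (i == j) || C i j.

Lemma modS (i : 'I_n) : i.+1 %% n = if i.+1 == n then 0 else i.+1.
Proof.
have := ltn_ord i; case: eqP => [->|ne] h; first by rewrite modnn.
by rewrite modn_small //; lia.
Qed.

Lemma modP (i : 'I_n) : (i + n).-1 %% n = if i == 0 :> nat then n.-1 else i.-1.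
Proof.
have := ltn_ord i; case: eqP => [->|ne] h; first by rewrite add0n modn_small //; lia.
have -> : (i + n).-1 = i.-1 + n by lia.
by rewrite modnDr modn_small //; lia.
Qed.

Lemma CE (i j : 'I_n) : C i j = (j == ordS i) || (i == ordS j).
Proof. by []. Qed.

Lemma C_sym : symmetric C.
Proof. by move=> i j; rewrite !CE orbC. Qed.

Lemma C_irr : irreflexive C.
Proof.
move=> i; rewrite CE orbb; apply/eqP => /(congr1 val) /=.
rewrite modS; have := ltn_ord i; case: eqP; lia.
Qed.

Lemma ordS_pred_neq (i : 'I_n) : ordS i != ord_pred i.
Proof.
apply/eqP => /(congr1 val) /=; rewrite modS modP; have := ltn_ord i.
case: eqP; case: eqP; lia.
Qed.

Lemma CP (i j : 'I_n) : C i j = (j == ordS i) || (j == ord_pred i).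
Proof.
rewrite CE; congr (_ || _); apply/eqP/eqP => [->|->]; by rewrite ?ordSK ?ord_predK.
Qed.

Lemma sumC (i : 'I_n) : \sum_j (C i j : nat) = 2.
Proof.
have -> : \sum_j (C i j : nat) = #|[set ordS i; ord_pred i]|.
  by rewrite -sum1_card [RHS]big_mkcond /=; apply: eq_bigr => j _; rewrite !inE CP; case: ifP.
by rewrite cards2 ordS_pred_neq.
Qed.

Lemma sumCp (i : 'I_n) : \sum_j (Cp i j : nat) = 3.
Proof.
have -> : \sum_j (Cp i j : nat) = #|i |: [set ordS i; ord_pred i]|.
  by rewrite -sum1_card [RHS]big_mkcond /=; apply: eq_bigr => j _;
     rewrite !inE /Cp CP (eq_sym i); case: ifP.
rewrite cardsU1 cards2 ordS_pred_neq !inE negb_or.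
by have := C_irr i; rewrite CP => /negbT/norP[-> ->].
Qed.

Lemma iter_ordS (z : 'I_n) k : val (iter k (@ordS n) z) = (z + k) %% n.
Proof.
elim: k => [|k IH] /=; first by rewrite addn0 modn_small.
by rewrite IH addnS -addn1 modnDml addn1.
Qed.

Lemma exit_ordS (Z : {set 'I_n}) i0 j0 : i0 \in Z -> j0 \notin Z ->
  exists2 i, i \in Z & ordS i \notin Z.
Proof.
move=> iZ jZ; apply/exists_inP; apply: contraR jZ; rewrite negb_exists_in => /forall_inP H.
have P : forall k, iter k (@ordS n) i0 \in Z.
  by elim=> [|k IH] //=; have := H _ IH; rewrite negbK.
have -> : j0 = iter (j0 + n - i0) (@ordS n) i0.
  apply: val_inj; rewrite iter_ordS.
  have h1 := ltn_ord i0; have h2 := ltn_ord j0.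
  have -> : i0 + (j0 + n - i0) = j0 + n by lia.
  by rewrite modnDr modn_small.
exact: P.
Qed.

Lemma QC2 (Z : {set 'I_n}) i0 j0 : i0 \in Z -> j0 \notin Z -> 2 <= Qc C Z Z.
Proof.
move=> iZ jZ; have [i i1 i2] := exit_ordS iZ jZ.
have [k k1 k2] : exists2 k, k \in ~: Z & ordS k \notin ~: Z.
  by apply: (@exit_ordS _ j0 i0); rewrite inE ?negbK.
move: k1 k2; rewrite !inE negbK => k1 k2.
rewrite -card_arcset; apply/card_gt1P; exists (i, ordS i), (ordS k, k).
rewrite !inE /= i1 i2 k1 k2 !CP eqxx ordSK eqxx orbT /=; split => //.
apply/eqP => -[e1 e2]; move: (ordS_pred_neq i); rewrite {2}e1 -e2 ordSK.
by rewrite eqxx.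
Qed.


Lemma C3 (i j : 'I_n) : n = 3 -> i != j -> C i j.
Proof.
move=> e3 ne; rewrite CE -!val_eqE /= !modS.
move: (ltn_ord i) (ltn_ord j) ne; rewrite -val_eqE /=.
case: (i.+1 =P n) => hi; case: (j.+1 =P n) => hj /=; lia.
Qed.

Definition Bc (Y Z : {set 'I_n}) : nat :=
  \sum_(i : 'I_n) \sum_(j : 'I_n) ((i \in Y) && (j \notin Z) && Cp i j).

Lemma Bsplit Y Z : Bc Y Z = #|Y :\: Z| + Qc C Y Z.
Proof.
have pt : forall i j, ((i \in Y) && (j \notin Z) && Cp i j : nat) =
   ((i \in Y) && (j \notin Z) && (i == j)) + ((i \in Y) && (j \notin Z) && C i j).
  move=> i j; rewrite /Cp; case: (i =P j) => [->|_] /=.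
    by rewrite C_irr !andbF addn0 andbT.
  by rewrite !andbF.
rewrite /Bc (eq_bigr _ (fun i _ => eq_bigr _ (fun j _ => pt i j))) -sum2_split; congr (_ + _).
rewrite -sum1_card [RHS]big_mkcond /=; apply: eq_bigr => i _.
rewrite (bigD1 i) //= big1 => [|j /negbTE ji]; last by rewrite eq_sym ji andbF.
by rewrite !inE eqxx andbT addn0 andbC; case: ifP.
Qed.

Lemma B4 (Y Z : {set 'I_n}) y1 y2 z1 z2 : y1 \in Y -> y2 \notin Y ->
  z1 \in Z -> z2 \notin Z -> 4 <= Bc Y Z + Bc Z Y.
Proof.
move=> y1Y y2Y z1Z z2Z; rewrite !Bsplit.
have F : Qc C (Y :&: Z) (Y :&: Z) + Qc C (Y :|: Z) (Y :|: Z) <= Qc C Y Z + Qc C Z Y := QF C_sym Y Z.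
have c1 : forall (A : {set 'I_n}) x, x \in A -> 1 <= #|A|.
  by move=> A x xA; apply/card_gt0P; exists x.
case: (pickP (mem (Y :&: Z))) => [a aI | I0];
  case: (pickP (mem (~: (Y :|: Z)))) => [b bU | U0].
- have h1 := @QC2 (Y :&: Z) a b aI.
  have h2 := @QC2 (Y :|: Z) a b.
  move: bU; rewrite /= !inE negb_or => /andP[bY bZ].
  move: aI; rewrite /= !inE => /andP[aY aZ].
  have := h1 ltac:(by rewrite !inE (negbTE bY)); have := h2 ltac:(by rewrite !inE aY) ltac:(by rewrite !inE negb_or bY bZ).
  lia.
- have y2Z : y2 \in Z by have := U0 y2; rewrite /= !inE negb_or y2Y /= => /negbFE.
  have z2Y : z2 \in Y by have := U0 z2; rewrite /= !inE negb_or z2Z /= andbT => /negbFE.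
  have h1 : 1 <= #|Z :\: Y| by apply: (c1 _ y2); rewrite !inE y2Z y2Y.
  have h2 : 1 <= #|Y :\: Z| by apply: (c1 _ z2); rewrite !inE z2Y z2Z.
  have h3 := @QC2 (Y :&: Z) a y2 aI ltac:(by rewrite !inE (negbTE y2Y)).
  lia.
- have y1Z : (y1 \in Z) = false by have := I0 y1; rewrite /= !inE y1Y.
  have z1Y : (z1 \in Y) = false by have := I0 z1; rewrite /= !inE z1Z andbT.
  have h1 : 1 <= #|Y :\: Z| by apply: (c1 _ y1); rewrite !inE y1Z y1Y.
  have h2 : 1 <= #|Z :\: Y| by apply: (c1 _ z1); rewrite !inE z1Y z1Z.
  have /andP[bY bZ] : (b \notin Y) && (b \notin Z) by move: bU; rewrite /= !inE negb_or.
  have h3 := @QC2 (Y :|: Z) y1 b ltac:(by rewrite !inE y1Y) ltac:(by rewrite !inE negb_or bY bZ).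
  lia.
- have eZ : Z = ~: Y.
    apply/setP => x; have := I0 x; have := U0 x; rewrite /= !inE negb_or.
    by case: (x \in Y); case: (x \in Z).
  subst Z; rewrite !setDE setCK !setIid.
  have cs := cardsC Y; rewrite card_ord in cs.
  case: (ltnP 3 n) => n4; first lia.
  have e3 : n = 3 by lia.
  case: (ltnP 1 #|Y|) => Y2.
    have /card_gt1P[i [j [iY jY ij]]] := Y2.
    have := @Qc_ge1 _ C Y (~: Y) i j iY ltac:(by rewrite !inE negbK) (C3 e3 ij); lia.
  have /card_gt1P[i [j [iY jY ij]]] : 1 < #|~: Y| by lia.
  have := @Qc_ge1 _ C (~: Y) Y i j iY ltac:(by rewrite !inE in jY) (C3 e3 ij); lia.
Qed.

End Cyc.

Lemma sum_pair (U W : finType) (F : U * W -> nat) :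
  \sum_(p : U * W) F p = \sum_(u : U) \sum_(i : W) F (u, i).
Proof. by rewrite pair_big /=; apply: eq_bigr => -[u i]. Qed.

Section Prod.
Variable V : finType.
Variable e : rel V.
Hypothesis es : symmetric e.
Hypothesis ei : irreflexive e.
Variable n : nat.
Hypothesis n3 : 2 < n.
Local Notation C := (cycle_rel n).
Local Notation H := (strong_prod e (cycle_rel n)).

Lemma H_sym : symmetric H.
Proof.
move=> [u i] [v j]; rewrite /strong_prod /= (eq_sym u) (eq_sym i) es (C_sym i j).
by [].
Qed.

Lemma H_irr : irreflexive H.
Proof. by move=> [u i]; rewrite /strong_prod /= ei (C_irr n3) !andbF. Qed.

Definition sec (A : {set V * 'I_n}) u : {set 'I_n} := [set i | (u, i) \in A].
Definition lay (A : {set V * 'I_n}) i : {set V} := [set u | (u, i) \in A].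
Definition Ep (u v : V) := (u == v) || e u v.
Definition BG (P Q : {set V}) : nat :=
  \sum_(u : V) \sum_(v : V) ((u \in P) && (v \notin Q) && Ep u v).

Lemma QH4 (A B : {set V * 'I_n}) : Qc H A B =
  \sum_u \sum_v \sum_i \sum_j ((u, i) \in A) && ((v, j) \notin B) && H (u, i) (v, j).
Proof.
rewrite /Qc sum_pair; apply: eq_bigr => u _.
under eq_bigr => i _ do rewrite sum_pair.
by rewrite exchange_big.
Qed.

Lemma col_pt (A B : {set V * 'I_n}) u v :
  \sum_i \sum_j (((u, i) \in A) && ((v, j) \notin B) && H (u, i) (v, j) : nat) =
  (u == v) * Qc C (sec A u) (sec B v) + e u v * Bc (sec A u) (sec B v).
Proof.
rewrite /Qc /Bc; case: (u =P v) => [<-|nuv].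
  rewrite ei mul1n mul0n addn0; apply: eq_bigr => i _; apply: eq_bigr => j _.
  by rewrite /strong_prod /= eqxx ei !inE andbF orbF.
rewrite mul0n add0n; case euv: (e u v).
  rewrite mul1n; apply: eq_bigr => i _; apply: eq_bigr => j _.
  have nuv2 : (u == v) = false by apply/eqP.
  by rewrite /strong_prod /= nuv2 euv !inE /Cp andbT.
rewrite mul0n; apply: big1 => i _; apply: big1 => j _.
by rewrite /strong_prod /= euv !andbF; case: (u =P v); rewrite ?andbF.
Qed.

Lemma QHcol (A B : {set V * 'I_n}) : Qc H A B = \sum_u Qc C (sec A u) (sec B u) +
  \sum_u \sum_v e u v * Bc (sec A u) (sec B v).
Proof.
rewrite QH4 -big_split; apply: eq_bigr => u _.
under eq_bigr => v _ do rewrite col_pt.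
rewrite big_split /=; congr (_ + _).
by rewrite (bigD1 u) //= eqxx mul1n big1 ?addn0 // => v /negbTE; rewrite eq_sym => ->.
Qed.

Lemma lay_pt (A B : {set V * 'I_n}) i j :
  \sum_u \sum_v (((u, i) \in A) && ((v, j) \notin B) && H (u, i) (v, j) : nat) =
  (i == j) * Qc e (lay A i) (lay B j) + C i j * BG (lay A i) (lay B j).
Proof.
rewrite /Qc /BG; case: (i =P j) => [<-|nij].
  rewrite (C_irr n3) mul1n mul0n addn0; apply: eq_bigr => u _; apply: eq_bigr => v _.
  rewrite /strong_prod /= eqxx (C_irr n3) !inE !andbF /=.
  by case: (u =P v) => [->|]; rewrite ?ei ?andbF //= orbF.
rewrite mul0n add0n; case cij: (C i j).
  rewrite mul1n; apply: eq_bigr => u _; apply: eq_bigr => v _.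
  rewrite /strong_prod /= cij !inE /Ep; case: (i =P j) => // _.
  by case: (u =P v) => //= _; rewrite andbT.
rewrite mul0n; apply: big1 => u _; apply: big1 => v _.
have nij2 : (i == j) = false by apply/eqP.
by rewrite /strong_prod /= cij nij2 !andbF.
Qed.

Lemma QH4' (A B : {set V * 'I_n}) : Qc H A B =
  \sum_i \sum_j \sum_u \sum_v ((u, i) \in A) && ((v, j) \notin B) && H (u, i) (v, j).
Proof.
rewrite /Qc sum_pair exchange_big; apply: eq_bigr => i _.
under eq_bigr => u _ do rewrite sum_pair exchange_big.
by rewrite exchange_big.
Qed.

Lemma QHlay (A B : {set V * 'I_n}) : Qc H A B = \sum_i Qc e (lay A i) (lay B i) +
  \sum_i \sum_j C i j * BG (lay A i) (lay B j).
Proof.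
rewrite QH4' -big_split; apply: eq_bigr => i _.
under eq_bigr => j _ do rewrite lay_pt.
rewrite big_split /=; congr (_ + _).
by rewrite (bigD1 i) //= eqxx mul1n big1 ?addn0 // => j /negbTE; rewrite eq_sym => ->.
Qed.

End Prod.

Section Low.
Variable V : finType.
Variable e : rel V.
Hypothesis es : symmetric e.
Hypothesis ei : irreflexive e.
Variable n : nat.
Hypothesis n3 : 2 < n.
Local Notation C := (cycle_rel n).
Local Notation H := (strong_prod e (cycle_rel n)).

Lemma sum_const_I (c : nat) : \sum_(i < n) c = n * c.
Proof. by rewrite big_const_ord iter_addn_0 mulnC. Qed.

Lemma sumsumC (c : nat) : \sum_(i < n) \sum_(j < n) C i j * c = 2 * n * c.
Proof.
under eq_bigr => i _ do rewrite -big_distrl /= (sumC n3).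
by rewrite sum_const_I mulnA (mulnC n 2).
Qed.

Lemma BG_ge P Q : Qc e P Q <= BG e P Q.
Proof.
apply: leq_sum => u _; apply: leq_sum => v _.
by rewrite /Ep; case: (_ \in _); case: (_ \in _); case: (u == v); case: (e u v).
Qed.

Lemma low1 (X : {set V * 'I_n}) u0 w0 :
  (forall i, (u0, i) \in X) -> (forall i, (w0, i) \notin X) ->
  3 * n * edge_conn e <= Qc H X X.
Proof.
move=> uX wX; rewrite (QHlay ei n3); set L := lay X; set lam := edge_conn e.
have hL : forall i, u0 \in L i /\ w0 \notin L i by move=> i; rewrite !inE uX wX.
have h1 : n * lam <= \sum_i Qc e (L i) (L i).
  rewrite -sum_const_I; apply: leq_sum => i _.
  have [a b] := hL i. rewrite /lam; exact: (edge_conn_le es a b).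
set W := \sum_i \sum_j C i j * Qc e (L i) (L j).
have hW : W <= \sum_i \sum_j C i j * BG e (L i) (L j).
  by apply: leq_sum => i _; apply: leq_sum => j _; rewrite leq_mul2l BG_ge orbT.
have W' : W = \sum_i \sum_j C i j * Qc e (L j) (L i).
  rewrite /W exchange_big; apply: eq_bigr => i _; apply: eq_bigr => j _.
  by rewrite C_sym.
have h2 : 2 * n * (2 * lam) <= W + W.
  rewrite {2}W' /W sum2_split -sumsumC; apply: leq_sum => i _; apply: leq_sum => j _.
  rewrite -mulnDr leq_mul2l; apply/orP; right.
  have F := QF es (L i) (L j).
  have [a1 b1] := hL i; have [a2 b2] := hL j.
  have c1 := @edge_conn_le _ _ es (L i :&: L j) u0 w0 ltac:(by rewrite inE a1 a2)
     ltac:(by rewrite inE (negbTE b1)).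
  have c2 := @edge_conn_le _ _ es (L i :|: L j) u0 w0 ltac:(by rewrite inE a1)
     ltac:(by rewrite inE negb_or b1 b2).
  rewrite -/lam in c1 c2; lia.
lia.
Qed.


Lemma sum_sub (T : finType) (U : {set T}) (F : T -> nat) :
  \sum_(u in U) F u <= \sum_u F u.
Proof. by rewrite [X in _ <= X](bigID (mem U)) /= leq_addr. Qed.

Lemma BcY0 (Y : {set 'I_n}) : Bc Y set0 = 3 * #|Y|.
Proof.
rewrite /Bc -sum1_card big_distrr [RHS]big_mkcond /=; apply: eq_bigr => i _.
case: (i \in Y) => /=; last by rewrite big1.
by rewrite -(sumCp n3 i) muln1; apply: eq_bigr => j _; rewrite inE.
Qed.

Lemma Bc0Z (Z : {set 'I_n}) : Bc set0 Z = 0.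
Proof. by rewrite /Bc big1 // => i _; rewrite big1 // => j _; rewrite inE. Qed.

Lemma degE u : degree e u = \sum_v (e u v : nat).
Proof.
by rewrite /degree -sum1_card [LHS]big_mkcond /=; apply: eq_bigr => v _; rewrite inE; case: (e u v).
Qed.

Lemma min_deg_le u : min_deg e <= degree e u.
Proof. exact: (@bigmin_le V xpredT (degree e) #|V| u). Qed.

Lemma card_sec (S : {set V * 'I_n}) : \sum_u #|sec S u| = #|S|.
Proof.
rewrite -sum1_card [RHS]big_mkcond /= sum_pair; apply: eq_bigr => u _.
by rewrite -sum1_card [LHS]big_mkcond /=; apply: eq_bigr => i _; rewrite inE.
Qed.


Lemma lowC (S : {set V * 'I_n}) : 1 < #|S| -> (forall u, exists i, (u, i) \notin S) ->
  6 * min_deg e + 2 <= Qc H S S.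
Proof.
move=> S2 nf.
pose Y := sec S.
pose U := [set u | Y u != set0].
have YU : forall u, u \notin U -> Y u = set0 by move=> u; rewrite inE negbK => /eqP.
have Yin : forall u, u \in U -> exists i, i \in Y u.
  by move=> u; rewrite inE => /set0Pn.
have Yout : forall u, exists j, j \notin Y u.
  by move=> u; have [j jS] := nf u; exists j; rewrite inE.
pose d u := \sum_v (e u v : nat).
pose DU u := \sum_(v in U) (e u v : nat).
pose k u := #|Y u|.
pose delta := min_deg e.
have dge : forall u, delta <= d u by move=> u; rewrite /d -degE; exact: min_deg_le.
have dsplit : forall u, d u = DU u + \sum_(v | v \notin U) (e u v : nat).
  by move=> u; rewrite /d /DU (bigID (mem U)) /=.
have DUK : forall u, u \in U -> DU u <= #|U| - 1.
  move=> u uU; rewrite /DU (big_setD1 u uU) /= ei add0n.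
  have := cardsD1 u U; rewrite uU add1n => ->; rewrite subn1 /=.
  rewrite -sum1_card; apply: leq_sum => v _; by case: (e u v).
have kpos : forall u, u \in U -> 1 <= k u.
  by move=> u /Yin[i iY]; apply/card_gt0P; exists i.
have hmain : \sum_(u in U) (2 + 2 * DU u + 3 * k u * (d u - DU u)) <= Qc H S S.
  rewrite (QHcol ei) -/Y.
  have hA : \sum_(u in U) 2 <= \sum_u Qc C (Y u) (Y u).
    apply: leq_trans (sum_sub U _); apply: leq_sum => u uU.
    have [i iY] := Yin u uU; have [j jY] := Yout u.
    exact: (QC2 n3 iY jY).
  have hB : forall u, u \in U ->
    \sum_v e u v * Bc (Y u) (Y v) =
    \sum_(v in U) e u v * Bc (Y u) (Y v) + 3 * k u * (d u - DU u).
    move=> u uU; rewrite (bigID (mem U)) /=; congr (_ + _).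
    rewrite (dsplit u) addKn big_distrr /= mulnC; apply: eq_bigr => v vU.
    by rewrite (YU v vU) BcY0 /k mulnC (mulnC 3).
  have hB2 : \sum_u \sum_v e u v * Bc (Y u) (Y v) =
     \sum_(u in U) \sum_(v in U) e u v * Bc (Y u) (Y v) +
     \sum_(u in U) 3 * k u * (d u - DU u).
    rewrite (bigID (mem U)) /= [X in _ + X]big1 ?addn0; last first.
      by move=> u uU; apply: big1 => v _; rewrite YU // Bc0Z muln0.
    rewrite -big_split /=; apply: eq_bigr => u uU; exact: hB.
  have hQ : \sum_(u in U) 2 * DU u <= \sum_(u in U) \sum_(v in U) e u v * Bc (Y u) (Y v).
    set Q := \sum_(u in U) \sum_(v in U) e u v * Bc (Y u) (Y v).
    have Q' : Q = \sum_(u in U) \sum_(v in U) e u v * Bc (Y v) (Y u).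
      rewrite /Q exchange_big; apply: eq_bigr => u _; apply: eq_bigr => v _.
      by rewrite es.
    suff : \sum_(u in U) 2 * DU u + \sum_(u in U) 2 * DU u <= Q + Q by lia.
    rewrite {2}Q' /Q -!big_split /=; apply: leq_sum => u uU.
    rewrite /DU big_distrr /= -big_split -big_split /=; apply: leq_sum => v vU.
    case: (e u v); rewrite ?mul0n ?muln0 // !mul1n muln1.
    have [i1 i1Y] := Yin u uU; have [i2 i2Y] := Yout u.
    have [j1 j1Y] := Yin v vU; have [j2 j2Y] := Yout v.
    exact: (B4 n3 i1Y i2Y j1Y j2Y).
  have hs : \sum_(u in U) (2 + 2 * DU u + 3 * k u * (d u - DU u)) =
     \sum_(u in U) 2 + \sum_(u in U) 2 * DU u + \sum_(u in U) 3 * k u * (d u - DU u).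
    by rewrite big_split big_split.
  rewrite hB2 hs; lia.
pose K := #|U|.
have hk : \sum_(u in U) k u = #|S|.
  rewrite -(card_sec S) [RHS](bigID (mem U)) /= [X in _ = _ + X]big1 ?addn0 //.
  by move=> u uU; rewrite -/Y YU // cards0.
have T1 : 2 * K <= Qc H S S.
  apply: leq_trans hmain; rewrite /K mulnC -sum_nat_const; apply: leq_sum => u _; lia.
case: (ltnP 1 K) => K2.
- have h1 : K * (2 + 3 * delta) <=
      \sum_(u in U) (2 + 2 * DU u + 3 * k u * (d u - DU u)) + \sum_(u in U) DU u.
    rewrite -big_split /= /K -sum_nat_const; apply: leq_sum => u uU.
    have := kpos u uU; have := dge u; have : DU u <= d u by rewrite dsplit leq_addr.
    by nia.
  have h2 : \sum_(u in U) DU u <= K * (K - 1).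
    rewrite /K -sum_nat_const; apply: leq_sum => u uU; exact: DUK.
  nia.
- have K1 : K = 1.
    suff : 0 < K by lia.
    have /card_gt0P[[u i] uiS] : 0 < #|S| by lia.
    by apply/card_gt0P; exists u; rewrite inE; apply/set0Pn; exists i; rewrite inE.
  have /cards1P[u0 U0] : #|U| == 1 by apply/eqP.
  move: hmain hk; rewrite U0 !big_set1 => hm hk.
  have := DUK u0; rewrite U0 inE eqxx /= cards1 => /(_ isT) h0.
  have := dge u0; nia.
Qed.

End Low.

Lemma QcC (T : finType) (r : rel T) (rs : symmetric r) (A : {set T}) :
  Qc r (~: A) (~: A) = Qc r A A.
Proof.
rewrite (Qswap rs); apply: eq_bigr => x _; apply: eq_bigr => y _.
by rewrite !inE negbK (andbC (y \notin A)).
Qed.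

Lemma set2_eq (T : finType) (a b x y : T) : a != b ->
  ([set a; b] == [set x; y]) = ((a == x) && (b == y)) || ((a == y) && (b == x)).
Proof.
move=> ab; apply/eqP/idP => [E|]; last first.
  by case/orP => /andP[/eqP-> /eqP->]; [| rewrite setUC].
have h1 : a \in [set x; y] by rewrite -E set21.
have h2 : b \in [set x; y] by rewrite -E set22.
move: h1 h2; rewrite !inE => /orP[/eqP ax|/eqP ay] /orP[/eqP bx|/eqP b_y].
- by rewrite ax bx eqxx in ab.
- by rewrite ax b_y !eqxx.
- by rewrite ay bx !eqxx orbT.
- by rewrite ay b_y eqxx in ab.
Qed.

Section Arcs.
Variable V : finType.
Variable e : rel V.
Hypothesis es : symmetric e.
Hypothesis ei : irreflexive e.

Lemma arcs_edges : \sum_u \sum_v (e u v : nat) = 2 * #|edges e|.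
Proof.
pose P := [set p : V * V | e p.1 p.2].
pose f := fun p : V * V => [set p.1; p.2].
have EP : edges e = f @: P.
  apply/setP => E; apply/imset2P/imsetP => [[x y _]|[p]].
    by rewrite inE => exy ->; exists (x, y); rewrite ?inE.
  by rewrite inE => ep ->; exists p.1 p.2; rewrite ?inE.
have -> : \sum_u \sum_v (e u v : nat) = \sum_(p in P) 1.
  rewrite pair_big /= [RHS]big_mkcond /=; apply: eq_bigr => -[u v] _.
  by rewrite inE /=; case: (e u v).
rewrite EP (partition_big_imset f) /= mulnC -sum_nat_const.
apply: eq_bigr => E /imsetP[[x y]].
rewrite inE /= => exy ->.
have xy : x != y by apply/eqP => exy'; rewrite exy' ei in exy.
have c2 : #|[set (x, y); (y, x)]| = 2 by rewrite cards2 xpair_eqE negb_and xy.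
rewrite -c2 -sum1_card; apply: eq_bigl => -[a b] /=.
rewrite !inE /= /f /=.
case eab: (e a b) => /=.
  have ab : a != b by apply/eqP => eab'; rewrite eab' ei in eab.
  by rewrite set2_eq // !xpair_eqE.
rewrite !xpair_eqE; apply/esym/negbTE; apply/negP => /orP[/andP[/eqP ax /eqP yb]|/andP[/eqP ay /eqP bx]].
  by rewrite ax yb exy in eab.
by rewrite ay bx es exy in eab.
Qed.
End Arcs.

Lemma QcTT (T : finType) (r : rel T) : Qc r setT setT = 0.
Proof. by rewrite /Qc big1 // => x _; rewrite big1 // => y _; rewrite !inE andbF. Qed.
Lemma Qc00 (T : finType) (r : rel T) : Qc r set0 set0 = 0.
Proof. by rewrite /Qc big1 // => x _; rewrite big1 // => y _; rewrite !inE. Qed.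
Lemma BcTT n : Bc (n := n) setT setT = 0.
Proof. by rewrite /Bc big1 // => x _; rewrite big1 // => y _; rewrite !inE andbF. Qed.

Section Up.
Variable V : finType.
Variable e : rel V.
Hypothesis es : symmetric e.
Hypothesis ei : irreflexive e.
Variable n : nat.
Hypothesis n3 : 2 < n.
Local Notation C := (cycle_rel n).
Local Notation H := (strong_prod e (cycle_rel n)).

Let i0 : 'I_n := Ordinal (ltn_trans (isT : 0 < 2) n3).

Lemma Hcol u i : H (u, i) (u, ordS i).
Proof. by rewrite /strong_prod /= eqxx /= CP eqxx. Qed.

Lemma up1 (A : {set V}) a b : a \in A -> b \notin A ->
  restricted_edge_cut H (cutset H [set p : V * 'I_n | p.1 \in A]) /\
  Qc H [set p : V * 'I_n | p.1 \in A] [set p : V * 'I_n | p.1 \in A] = 3 * n * Qc e A A.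
Proof.
move=> aA bA; set X := [set p : V * 'I_n | p.1 \in A]; split.
  apply: restricted_cutset.
  - exact: H_sym.
  - exact: H_irr.
  - by exists (a, i0); rewrite inE.
  - by exists (b, i0); rewrite inE.
  - by move=> [u i]; exists (u, ordS i); [exact: Hcol| rewrite !inE].
have sX : forall u, sec X u = if u \in A then setT else set0.
  by move=> u; apply/setP => i; rewrite !inE; case: (u \in A); rewrite inE.
rewrite (QHcol ei) big1 ?add0n; last by move=> u _; rewrite sX; case: (u \in A); rewrite ?QcTT ?Qc00.
rewrite /Qc big_distrr /=; apply: eq_bigr => u _; rewrite big_distrr /=; apply: eq_bigr => v _.
rewrite !sX; case: (u \in A); case vA: (v \in A) => /=;
  rewrite ?BcTT ?Bc0Z ?muln0 ?andbF //.
by rewrite (BcY0 n3) cardsT card_ord mulnC; case: (e u v).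
Qed.


Lemma i0_ordS : (ordS i0 == i0) = false.
Proof. by apply/negbTE; have := C_irr n3 i0; rewrite CP eq_sym => /norP[]. Qed.
Lemma ordS_neq (i : 'I_n) : (ordS i == i) = false.
Proof. by apply/negbTE; have := C_irr n3 i; rewrite CP eq_sym => /norP[]. Qed.
Lemma ordP_neq (i : 'I_n) : (ord_pred i == i) = false.
Proof. by apply/negbTE; have := C_irr n3 i; rewrite CP eq_sym (eq_sym i) => /norP[]. Qed.

Lemma up2 (v0 : V) : (forall u, exists v, e u v) ->
  restricted_edge_cut H (cutset H [set p : V * 'I_n | p.2 == i0]) /\
  Qc H [set p : V * 'I_n | p.2 == i0] [set p : V * 'I_n | p.2 == i0] =
    2 * (#|V| + 2 * #|edges e|).
Proof.
move=> nb; set X := [set p : V * 'I_n | p.2 == i0]; split.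
  apply: restricted_cutset.
  - exact: H_sym.
  - exact: H_irr.
  - by exists (v0, i0); rewrite inE.
  - by exists (v0, ordS i0); rewrite inE i0_ordS.
  move=> [u i]; case: (i =P i0) => [->|ni].
    have [v euv] := nb u; exists (v, i0); last by rewrite !inE.
    by rewrite /strong_prod /= ?eqxx euv ?orbT.
  case: (ordS i =P i0) => [si|nsi].
    exists (u, ord_pred i); first by rewrite /strong_prod /= eqxx CP eqxx orbT.
    rewrite !inE /=; have -> : (i == i0) = false by apply/eqP.
    apply/esym/eqP => pi; move: (ordS_pred_neq n3 i).
    by rewrite si pi eqxx.
  by exists (u, ordS i); [exact: Hcol| rewrite !inE; do 2 case: eqP].
have lX : forall i, lay X i = if i == i0 then setT else set0.
  by move=> i; apply/setP => u; rewrite !inE; case: (i == i0); rewrite inE.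
rewrite (QHlay ei n3) big1 ?add0n; last by move=> i _; rewrite lX; case: (i == i0); rewrite ?QcTT ?Qc00.
set W := BG e setT set0.
rewrite (bigD1 i0) //= [X in _ + X]big1 ?addn0; last first.
  by move=> i ni; apply: big1 => j _; rewrite lX (negbTE ni) /BG big1 ?muln0 // => u _; rewrite big1 // => v _; rewrite inE.
have -> : \sum_j C i0 j * BG e (lay X i0) (lay X j) = \sum_j C i0 j * W.
  apply: eq_bigr => j _; rewrite !lX eqxx; case: (j =P i0) => [->|_].
    by rewrite (C_irr n3).
  by [].
rewrite -big_distrl /= (sumC n3); congr (2 * _).
have -> : #|V| = \sum_(u : V) 1 by rewrite sum1_card.
rewrite /W /BG -(arcs_edges es ei) -big_split /=; apply: eq_bigr => u _.
have pt : forall v, ((u \in setT) && (v \notin set0) && Ep e u v : nat) = (u == v) + e u v.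
  move=> v; rewrite !inE /Ep /=; case: (u =P v) => [<-|] //=; by rewrite ei.
rewrite (eq_bigr _ (fun v _ => pt v)) big_split /=; congr (_ + _).
by rewrite (bigD1 u) //= eqxx big1 // => v /negbTE; rewrite eq_sym => ->.
Qed.


Lemma up3 (u0 : V) : (forall u, exists v, e u v) ->
  restricted_edge_cut H (cutset H [set (u0, i0); (u0, ordS i0)]) /\
  Qc H [set (u0, i0); (u0, ordS i0)] [set (u0, i0); (u0, ordS i0)] <=
    6 * degree e u0 + 2.
Proof.
move=> nb; set X := [set (u0, i0); (u0, ordS i0)]; split.
  apply: restricted_cutset.
  - exact: H_sym.
  - exact: H_irr.
  - by exists (u0, i0); rewrite !inE eqxx.
  - exists (u0, ord_pred i0); rewrite !inE !xpair_eqE eqxx /= ordP_neq /=.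
    by rewrite eq_sym (negbTE (ordS_pred_neq n3 i0)).
  move=> [w j]; case: (boolP ((w, j) \in X)) => wX.
    move: (wX); rewrite !inE => /orP[/eqP[-> ->]|/eqP[-> ->]].
      by exists (u0, ordS i0); [exact: Hcol | rewrite !inE !eqxx orbT].
    exists (u0, i0); last by rewrite !inE !eqxx.
    by rewrite (H_sym es); exact: Hcol.
  case: (w =P u0) => [ew|nw].
    have [v ev] := nb w; exists (v, j).
      by rewrite /strong_prod /= eqxx ev orbT.
    apply/esym/negbTE; rewrite !inE !xpair_eqE; apply/negP => /orP[] /andP[/eqP vu _];
      by rewrite vu -ew ei in ev.
  exists (w, ordS j); first exact: Hcol.
  apply/esym/negbTE; rewrite !inE !xpair_eqE; apply/negP => /orP[] /andP[/eqP wu _];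
    exact: nw.
pose Z : {set 'I_n} := [set i0; ordS i0].
have sX : forall u, sec X u = if u == u0 then Z else set0.
  move=> u; apply/setP => i; rewrite !inE !xpair_eqE.
  by case: (u == u0); rewrite /= ?inE.
have Z2 : #|Z| = 2 by rewrite cards2 eq_sym i0_ordS.
have QZ : Qc C Z Z <= 2.
  rewrite -card_arcset.
  apply: leq_trans (_ : #|[set (i0, ord_pred i0); (ordS i0, ordS (ordS i0))]| <= 2).
    apply: subset_leq_card; apply/subsetP => -[i j]; rewrite !inE /= CP !xpair_eqE.
    move=> /andP[/andP[/orP[]/eqP-> jZ] /orP[]/eqP jj]; move: jZ; rewrite jj ?ordSK /= ?eqxx ?orbT //=.
  by rewrite cards2; case: (_ != _).
rewrite (QHcol ei) (bigD1 u0) //= big1 ?addn0; last first.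
  by move=> u nu; rewrite sX (negbTE nu) Qc00.
rewrite (bigD1 u0) //= [X in _ + (_ + X)]big1 ?addn0; last first.
  by move=> u nu; apply: big1 => v _; rewrite sX (negbTE nu) Bc0Z muln0.
rewrite sX eqxx; set sm := \sum_v _.
have -> : sm = 6 * degree e u0.
  rewrite /sm (degE e u0) big_distrr /=; apply: eq_bigr => v _.
  case ev: (e u0 v); rewrite ?mul0n ?muln0 // mul1n muln1.
  have nv : (v == u0) = false by apply/eqP => vu; rewrite vu ei in ev.
  by rewrite sX nv (BcY0 n3) Z2.
lia.
Qed.

Lemma mindeg_att : 0 < #|V| -> exists u, degree e u = min_deg e.
Proof.
move=> /card_gt0P[x _].
case: (bigmin_att xpredT (degree e) #|V|) => [h|[u _ h]]; last by exists u.
have : degree e x < #|V|.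
  rewrite /degree; apply: proper_card; apply/properP; split; first exact: subset_predT.
  by exists x => //; rewrite inE ei.
by have := min_deg_le e x; rewrite /min_deg h; lia.
Qed.

End Up.

Unset Implicit Arguments.
Theorem theorem3p4 (V : finType) (e : rel V) (n : nat) :
  symmetric e -> irreflexive e ->
  connectedb e -> 1 < #|V| -> 3 <= n ->
  (exists S, restricted_edge_cut (strong_prod e (cycle_rel n)) S) /\
  restr_edge_conn (strong_prod e (cycle_rel n)) =
    minn (minn (3 * n * edge_conn e) (2 * (#|V| + 2 * #|edges e|)))
         (6 * min_deg e + 2).
Proof.
move=> es ei conn V2 n3.
have [v0 [v1 [_ _ nv01]]] := card_gt1P V2.
have nb : forall u, exists v, e u v.
  move=> u; have [w nw] : exists w, w != u.
    by case: (v0 =P u) => [<-|/eqP h]; [exists v1; rewrite eq_sym | exists v0].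
  move: conn => /forallP /(_ u) /forallP /(_ w) /connectP [p pp wl].
  case: p pp wl => [_ /= wu|v p /= /andP[euv _] _]; last by exists v.
  by rewrite wu eqxx in nw.
have [u0 du0] := mindeg_att ei n3 (ltnW V2).
have [R3 Q3] := up3 es ei n3 u0 nb.
have [A [[a aA] [b bA] QA]] := edge_conn_att e V2.
have [R1 Q1] := up1 es ei n3 aA bA.
have [R2 Q2] := up2 es ei n3 v0 nb.
set H := strong_prod e (cycle_rel n).
have lowS : forall S, restricted_edge_cut H S ->
    minn (3 * n * edge_conn e) (6 * min_deg e + 2) <= #|S|.
  move=> S /(extract (@H_sym _ _ es n)) [X [sub X2 Xc2]].
  have QS : Qc H X X <= #|S| by rewrite -card_cutset subset_leq_card.
  apply: leq_trans QS.
  case: (boolP [exists u, [forall i, (u, i) \in X]]) => [/existsP[u /forallP uX]| nU].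
    case: (boolP [exists w, [forall i, (w, i) \notin X]]) => [/existsP[w /forallP wX]| nW].
      by apply: leq_trans (geq_minl _ _) (low1 es ei n3 uX wX).
    apply: leq_trans (geq_minr _ _) _; rewrite -(QcC (@H_sym _ _ es n)).
    apply: (lowC es ei n3 Xc2) => w.
    move: nW; rewrite negb_exists => /forallP /(_ w); rewrite negb_forall => /existsP[i wi].
    by exists i; rewrite inE negbK; move: wi; rewrite negbK.
  apply: leq_trans (geq_minr _ _) _; apply: (lowC es ei n3 X2) => u.
  move: nU; rewrite negb_exists => /forallP /(_ u); rewrite negb_forall => /existsP[i ui].
  by exists i.
split; first by exists (cutset H [set (u0, Ordinal (ltn_trans (isT : 0 < 2) n3));
                                    (u0, ordS (Ordinal (ltn_trans (isT : 0 < 2) n3)))]).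
apply/eqP; rewrite eqn_leq; apply/andP; split.
  have b1 : restr_edge_conn H <= Qc H [set p : V * 'I_n | p.1 \in A] [set p : V * 'I_n | p.1 \in A].
    by rewrite -card_cutset; apply: bigmin_le.
  have b2 : restr_edge_conn H <= Qc H [set p : V * 'I_n | p.2 == Ordinal (ltn_trans (isT : 0 < 2) n3)]
      [set p : V * 'I_n | p.2 == Ordinal (ltn_trans (isT : 0 < 2) n3)].
    by rewrite -card_cutset; apply: bigmin_le.
  have b3 : restr_edge_conn H <= Qc H
      [set (u0, Ordinal (ltn_trans (isT : 0 < 2) n3)); (u0, ordS (Ordinal (ltn_trans (isT : 0 < 2) n3)))]
      [set (u0, Ordinal (ltn_trans (isT : 0 < 2) n3)); (u0, ordS (Ordinal (ltn_trans (isT : 0 < 2) n3)))].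
    by rewrite -card_cutset; apply: bigmin_le.
  rewrite du0 in Q3.
  have : 3 * n * Qc e A A <= 3 * n * edge_conn e by rewrite leq_mul2l QA orbT.
  rewrite /H in b1 b2 b3 *; lia.
have L3 := lowS _ R3.
have h : minn (3 * n * edge_conn e) (6 * min_deg e + 2) <= restr_edge_conn H.
  apply: bigmin_ge.
  - apply: leq_trans (L3) _; apply: subset_leq_card.
    by move: R3; rewrite /restricted_edge_cut /edge_cut => /andP[/andP[]].
  - by move=> S RS; exact: lowS.
apply: leq_trans h; rewrite leq_min geq_minr andbT.
by apply: leq_trans (geq_minl _ _) _; rewrite geq_minl.
Qed.
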